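(* Consider the repeated service game described in the context, with $t>0$, $\tau\in(0,t)$, $c>0$, $p>c$, $d\in(0,1)$, $w\in(0,1)$, and a strictly decreasing continuous utility $\Gamma:[0,1]\to(0,\infty)$ with $\Gamma(0)>p$. If the cooperation conditions hold, then $$d\le d_s(w;\tau,p):=1-\frac{c\left(1-(1-w)\frac{\tau}{t}\right)}{wp}\qquad\text{and}\qquad d\le d_c(w;\tau,p):=\Gamma^{-1}\!\left(\frac{p}{1-(1-w)\frac{\tau}{t}}\right).$$
   Context: A service provider (SP) and a client interact in rounds of duration $t>0$. The parameters are: trial time $\tau$, SP cost per unit time $c$, price per unit time $p$, channel outage probability $d$, continuation probability (cooperation willingness) $w$, and a client utility function $\Gamma$. When both players use the cooperative strategy COOP, the long-term payoffs are $$\Pi_s^{\mathrm C}=\frac{(1-d)(p-c)t-dc\tau}{1-(1-d)w},\qquad \Pi_c^{\mathrm C}=\frac{(1-d)(\Gamma(d)-p)t+d\Gamma(d)\tau}{1-(1-d)w}.$$ For an integer $j\ge 2$, the long-term payoff of a player using the defect-and-recover-after-$j$-rounds strategy JDEF$_j$ against COOP is: - for the SP, $$\Pi_s^{(j)}=\frac{(1-d)\big(pt-c\tau-w^{j-1}c(t-\tau)\big)-dc\tau}{1-(1-d)w^{j}};$$ - for the client, $$\Pi_c^{(j)}=\frac{(1-d)\big(\Gamma(d)\tau+w^{j-1}(\Gamma(d)(t-\tau)-pt)\big)+d\Gamma(d)\tau}{1-(1-d)w^{j}}.$$ The cooperation conditions hold when both of the following hold: - $\Pi_s^{\mathrm C}\ge\Pi_s^{(j)}$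 for all integers $j\ge2$; - $\Pi_c^{\mathrm C}\ge \Pi_c^{(j)}$ for all integers $j\ge 2$. For $0<y\le \Gamma(0)$, we write $\Gamma^{-1}(y):=\sup\{x\in[0,1]:\Gamma(x)\ge y\}$. This coincides with the inverse of $\Gamma$ whenever $y$ is in the range of $\Gamma$. *)

(* Defs.v *)
From Stdlib Require Import Reals Lra Lia.
Open Scope R_scope.

(* Long-term payoffs when both players use COOP. *)
Definition PiC_s (t tau c p d w : R) : R :=
  ((1 - d) * (p - c) * t - d * c * tau) / (1 - (1 - d) * w).

Definition PiC_c (Gamma : R -> R) (t tau p d w : R) : R :=
  ((1 - d) * (Gamma d - p) * t + d * Gamma d * tau) / (1 - (1 - d) * w).

(* Long-term payoff of JDEF_j against COOP (j >= 2). *)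
Definition PiJ_s (t tau c p d w : R) (j : nat) : R :=
  ((1 - d) * (p * t - c * tau - w ^ (j - 1) * c * (t - tau)) - d * c * tau)
  / (1 - (1 - d) * w ^ j).

Definition PiJ_c (Gamma : R -> R) (t tau p d w : R) (j : nat) : R :=
  ((1 - d) * (Gamma d * tau + w ^ (j - 1) * (Gamma d * (t - tau) - p * t))
     + d * Gamma d * tau)
  / (1 - (1 - d) * w ^ j).

Definition cooperation_conditions (Gamma : R -> R) (t tau c p d w : R) : Prop :=
  (forall j : nat, (2 <= j)%nat -> PiC_s t tau c p d w >= PiJ_s t tau c p d w j) /\
  (forall j : nat, (2 <= j)%nat -> PiC_c Gamma t tau p d w >= PiJ_c Gamma t tau p d w j).

Definition strictly_decreasing_01 (Gamma : R -> R) : Prop :=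
  forall x y, 0 <= x <= 1 -> 0 <= y <= 1 -> x < y -> Gamma y < Gamma x.

Definition continuous_on_01 (Gamma : R -> R) : Prop :=
  forall x, 0 <= x <= 1 -> forall eps, 0 < eps ->
    exists delta, 0 < delta /\
      forall y, 0 <= y <= 1 -> Rabs (y - x) < delta -> Rabs (Gamma y - Gamma x) < eps.

Definition positive_on_01 (Gamma : R -> R) : Prop :=
  forall x, 0 <= x <= 1 -> 0 < Gamma x.

(* Gamma^{-1}(y) := sup { x in [0,1] | Gamma x >= y };
   "is_Gamma_inv Gamma y s" says s is that supremum (least upper bound). *)
Definition Gamma_level_set (Gamma : R -> R) (y : R) : R -> Prop :=
  fun x => 0 <= x <= 1 /\ Gamma x >= y.

Definition is_Gamma_inv (Gamma : R -> R) (y s : R) : Prop :=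
  is_lub (Gamma_level_set Gamma y) s.

Definition d_s (t tau c p w : R) : R :=
  1 - c * (1 - (1 - w) * (tau / t)) / (w * p).

Definition d_c_arg (t tau p w : R) : R :=
  p / (1 - (1 - w) * (tau / t)).

(* Main.v *)
Require Import Defs.
From Stdlib Require Import Reals Lra Lia.
Open Scope R_scope.

Lemma lim_aff (a b w : R) : 0 < w < 1 ->
  (forall k : nat, (1 <= k)%nat -> a + b * w ^ k >= 0) -> a >= 0.
Proof.
  intros Hw H.
  destruct (Rlt_or_le a 0) as [Ha|Ha]; [|lra].
  exfalso.
  assert (Hw1 : Rabs w < 1) by (rewrite Rabs_right; lra).
  assert (Heps : 0 < - a / (Rabs b + 1)).
  { apply Rdiv_lt_0_compat; [lra| pose proof (Rabs_pos b); lra]. }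
  destruct (pow_lt_1_zero w Hw1 _ Heps) as [N HN].
  specialize (HN (max N 1) ltac:(lia)).
  specialize (H (max N 1) ltac:(lia)).
  set (q := w ^ max N 1) in *.
  assert (Hq : 0 <= q) by (apply pow_le; lra).
  rewrite Rabs_right in HN by lra.
  pose proof (Rabs_pos b).
  assert (Hbq : Rabs b * q < - a).
  { apply Rmult_lt_compat_r with (r := Rabs b + 1) in HN; [|lra].
    replace (- a / (Rabs b + 1) * (Rabs b + 1)) with (- a) in HN by (field; lra).
    nra. }
  assert (b * q <= Rabs b * q).
  { destruct (Rle_or_lt 0 b). rewrite Rabs_right by lra. nra.
    rewrite Rabs_left by lra. nra. }
  lra.
Qed.

Lemma div_nonneg (x y : R) : 0 <= x -> 0 < y -> 0 <= x / y.
Proof. intros; unfold Rdiv; apply Rmult_le_pos; [lra|left; apply Rinv_0_lt_compat; lra]. Qed.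

Lemma frac_ge (X A Z B : R) : 0 < A -> 0 < B -> X / A >= Z / B -> X * B - Z * A >= 0.
Proof.
  intros HA HB H.
  assert (E : X * B - Z * A = (X / A - Z / B) * (A * B)) by (field; lra).
  rewrite E. apply Rle_ge, Rmult_le_pos; nra.
Qed.

Theorem corollary1 (Gamma : R -> R) (t tau c p d w : R) :
  0 < t -> 0 < tau -> tau < t -> 0 < c -> c < p ->
  0 < d -> d < 1 -> 0 < w -> w < 1 ->
  strictly_decreasing_01 Gamma -> continuous_on_01 Gamma -> positive_on_01 Gamma ->
  Gamma 0 > p ->
  cooperation_conditions Gamma t tau c p d w ->
  d <= d_s t tau c p w /\
  (exists s, is_Gamma_inv Gamma (d_c_arg t tau p w) s /\ d <= s).
Proof.
  intros Ht Htau Htt Hc Hcp Hd0 Hd1 Hw0 Hw1 _ _ Hpos HG0 [HS HC].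
  assert (HA : 0 < 1 - (1 - d) * w) by nra.
  assert (Hq : forall k : nat, 0 <= w ^ k <= 1).
  { intro k. split. apply pow_le; lra. rewrite <- (pow1 k). apply pow_incr; lra. }
  assert (HB : forall k : nat, 0 < 1 - (1 - d) * (w * w ^ k)).
  { intro k. specialize (Hq k).
    assert (w * w ^ k <= 1 * 1) by (apply Rmult_le_compat; lra).
    assert (0 <= w * w ^ k) by nra. nra. }
  split.
  - set (X := (1 - d) * (p - c) * t - d * c * tau).
    set (Y := (1 - d) * (p * t - c * tau) - d * c * tau).
    assert (Ha : X - (1 - (1 - d) * w) * Y >= 0).
    { apply (lim_aff _ (- X * (1 - d) * w + (1 - (1 - d) * w) * (1 - d) * c * (t - tau)) w);
        [lra|].
      intros k Hk.
      specialize (HS (S k) ltac:(lia)).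
      unfold PiC_s, PiJ_s in HS.
      replace (S k - 1)%nat with k in HS by lia.
      change (w ^ S k) with (w * w ^ k) in HS.
      apply frac_ge in HS; [|exact HA|apply HB].
      fold X in HS. unfold Y.
      replace (X - (1 - (1 - d) * w) * ((1 - d) * (p * t - c * tau) - d * c * tau) +
        (- X * (1 - d) * w + (1 - (1 - d) * w) * (1 - d) * c * (t - tau)) * w ^ k)
        with (X * (1 - (1 - d) * (w * w ^ k)) -
       ((1 - d) * (p * t - c * tau - w ^ k * c * (t - tau)) - d * c * tau) *
       (1 - (1 - d) * w)) by ring.
      exact HS. }
    unfold X, Y in Ha.
    assert (Hk : (1 - d) * w * p * t - c * (t - tau + w * tau) >= 0) by nra.
    unfold d_s.
    assert (E : 1 - c * (1 - (1 - w) * (tau / t)) / (w * p) - d =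
       ((1 - d) * w * p * t - c * (t - tau + w * tau)) / (w * p * t)).
    { field. repeat split; lra. }
    assert (0 <= ((1 - d) * w * p * t - c * (t - tau + w * tau)) / (w * p * t)).
    { apply div_nonneg. lra. apply Rmult_lt_0_compat; [|lra]. nra. }
    lra.
  - set (G := Gamma d).
    set (X := (1 - d) * (G - p) * t + d * G * tau).
    assert (Ha : X - (1 - (1 - d) * w) * (G * tau) >= 0).
    { apply (lim_aff _ (- X * (1 - d) * w - (1 - (1 - d) * w) * (1 - d) * (G * (t - tau) - p * t)) w);
        [lra|].
      intros k Hk.
      specialize (HC (S k) ltac:(lia)).
      unfold PiC_c, PiJ_c in HC.
      replace (S k - 1)%nat with k in HC by lia.
      change (w ^ S k) with (w * w ^ k) in HC.
      apply frac_ge in HC; [|exact HA|apply HB].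
      fold G X in HC.
      replace (X - (1 - (1 - d) * w) * (G * tau) +
        (- X * (1 - d) * w - (1 - (1 - d) * w) * (1 - d) * (G * (t - tau) - p * t)) * w ^ k)
        with (X * (1 - (1 - d) * (w * w ^ k)) -
       ((1 - d) * (G * tau + w ^ k * (G * (t - tau) - p * t)) + d * G * tau) *
       (1 - (1 - d) * w)) by ring.
      exact HC. }
    unfold X in Ha.
    assert (Hk : G * (t - tau + w * tau) - p * t >= 0) by nra.
    assert (HD : 0 < t - tau + w * tau) by nra.
    assert (HGd : G >= d_c_arg t tau p w).
    { unfold d_c_arg.
      assert (E : G - p / (1 - (1 - w) * (tau / t)) =
         (G * (t - tau + w * tau) - p * t) / (t - tau + w * tau)).
      { assert (E1 : 1 - (1 - w) * (tau / t) = (t - tau + w * tau) / t) by (field; lra).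
        rewrite E1. field. lra. }
      assert (0 <= (G * (t - tau + w * tau) - p * t) / (t - tau + w * tau)).
      { apply div_nonneg; lra. }
      lra. }
    assert (Hin : Gamma_level_set Gamma (d_c_arg t tau p w) d).
    { split; [lra|exact HGd]. }
    destruct (completeness (Gamma_level_set Gamma (d_c_arg t tau p w))) as [s Hs].
    { exists 1. intros x [Hx _]. lra. }
    { exists d. exact Hin. }
    exists s. split; [exact Hs|]. apply Hs. exact Hin.
Qed.
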